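(* Let $S\subseteq[n]$ and let $\alpha=\mathbb I(S)\in\{0,1\}^n$ be the indicator vector of $S$ (its $j$-th entry is $1$ if $j\in S$ and $0$ otherwise). Then for every positive integer $t$, $$t\,\mathcal P(\mathrm{SM}_n(S))=\mathrm{Newton}(\kappa_{t\alpha}).$$
   Context: For $S,T\subseteq[n]$, write $T\le S$ if $|T|=|S|$ and, for each $1\le i\le |T|$, the $i$-th smallest element of $T$ is at most the $i$-th smallest element of $S$. The Schubert matroid $\mathrm{SM}_n(S)$ is the matroid on $[n]$ whose bases are $\{T\subseteq[n]: T\le S\}$. For a matroid $M$ on $[n]$ with set of bases $\mathcal B$, $\mathcal P(M)=\mathrm{conv}\{e_B: B\in\mathcal B\}\subset\mathbb R^n$ with $e_B=\sum_{b\in B}e_b$; $t\mathcal P=\{t x: x\in\mathcal P\}$. Key polynomials $\kappa_\alpha(x)\in\mathbb Z[x_1,\dots,x_n]$ for $\alpha\in\mathbb Z_{\ge0}^n$ are defined recursively: if $\alpha_1\ge\alpha_2\ge\dots\ge\alpha_n$ then $\kappa_\alpha=x_1^{\alpha_1}\cdots x_n^{\alpha_n}$; otherwise pick $i$ with $\alpha_i<\alpha_{i+1}$, let $\alpha'$ be $\alpha$ with entries $i,i+1$ swapped, and set $\kappa_\alpha=\partial_i(x_i\kappa_{\alpha'})$, where $\partial_i f=(f-s_if)/(x_i-x_{i+1})$ and $s_if$ swaps $x_i$ and $x_{i+1}$ (this is independent of the choice of $i$). For a polynomial $f=\sum_\beta c_\beta x^\beta$, $\mathrm{Newton}(f)=\mathrm{conv}\{\beta: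 c_\beta\neq0\}$. *)

(* Defs.v *)
From HB Require Import structures.
From mathcomp Require Import all_boot all_order all_algebra all_fingroup.
From mathcomp Require Import mpoly.
From Stdlib Require Import ClassicalEpsilon.

Set Implicit Arguments.
Unset Strict Implicit.
Unset Printing Implicit Defensive.

Import Order.TTheory GRing.Theory Num.Theory.
Local Open Scope ring_scope.

(* Convention: the ground set [n] = {1,...,n} is represented by 'I_n = {0,...,n-1}. *)

Definition sorted_elems (n : nat) (T : {set 'I_n}) : seq nat :=
  sort leq [seq val i | i <- enum T].

Definition gale_le (n : nat) (T S : {set 'I_n}) : bool :=
  (#|T| == #|S|) &&
  all (fun k => nth 0%N (sorted_elems T) k <= nth 0%N (sorted_elems S) k)%N
      (iota 0 #|T|).

Definition schubert_bases (n : nat) (S : {set 'I_n}) : {set {set 'I_n}} :=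
  [set T : {set 'I_n} | gale_le T S].

Definition conv (R : realFieldType) (n : nat) (A : seq 'rV[R]_n) (x : 'rV[R]_n) : Prop :=
  exists w : 'I_(size A) -> R,
    (forall k, 0 <= w k) /\ \sum_k w k = 1 /\
    x = \sum_k w k *: nth 0 A k.

Definition indic_vec (R : realFieldType) (n : nat) (B : {set 'I_n}) : 'rV[R]_n :=
  \row_j (j \in B)%:R.

Definition matroid_polytope (R : realFieldType) (n : nat) (bases : {set {set 'I_n}})
  : 'rV[R]_n -> Prop :=
  conv [seq indic_vec R B | B <- enum bases].

Definition dilate (R : realFieldType) (n : nat) (t : R) (P : 'rV[R]_n -> Prop)
  : 'rV[R]_n -> Prop :=
  fun x => exists2 y, P y & x = t *: y.

Definition mnm_swap (n : nat) (i j : 'I_n) (a : 'X_{1..n}) : 'X_{1..n} :=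
  [multinom a (tperm i j k) | k < n].

(* divided difference  (f - s f) / (x_i - x_j),  s swapping x_i and x_j
   (used with j = i+1); defined as the (unique) quotient *)
Definition ddiff (n : nat) (i j : 'I_n) (f : {mpoly int[n]}) : {mpoly int[n]} :=
  epsilon (inhabits 0)
    (fun g : {mpoly int[n]} => g * ('X_i - 'X_j) = f - msym (tperm i j) f).

Definition ascent (n : nat) (a : 'X_{1..n}) (ij : 'I_n * 'I_n) : bool :=
  (val ij.2 == (val ij.1).+1) && (a ij.1 < a ij.2)%N.

(* recursive definition with fuel; a is a partition (weakly decreasing)
   iff it has no ascent, in which case kappa_a = x^a *)
Fixpoint key_rec (n : nat) (fuel : nat) (a : 'X_{1..n}) : {mpoly int[n]} :=
  match fuel with
  | 0 => 'X_[a]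
  | k.+1 =>
    match [pick ij | ascent a ij] with
    | None => 'X_[a]
    | Some ij => ddiff ij.1 ij.2 ('X_ij.1 * key_rec k (mnm_swap ij.1 ij.2 a))
    end
  end.

(* n*n exceeds the number of inversions, so the fuel never runs out *)
Definition key_poly (n : nat) (a : 'X_{1..n}) : {mpoly int[n]} := key_rec (n * n) a.

Definition newton (R : realFieldType) (n : nat) (f : {mpoly int[n]}) : 'rV[R]_n -> Prop :=
  conv (map (fun m : 'X_{1..n} => \row_j ((m j)%:R : R)) (msupp f)).

Definition scaled_indicator (n : nat) (t : nat) (S : {set 'I_n}) : 'X_{1..n} :=
  [multinom (t * (i \in S))%N | i < n].

(* Main.v *)
Require Import Defs.
From HB Require Import structures.
From mathcomp Require Import all_boot all_order all_algebra all_fingroup.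
From mathcomp Require Import mpoly.
From mathcomp Require Import zify ring.
From Stdlib Require Import ClassicalEpsilon.

Set Implicit Arguments.
Unset Strict Implicit.
Unset Printing Implicit Defensive.

Module M1.

Set Implicit Arguments.
Unset Strict Implicit.
Unset Printing Implicit Defensive.

Section Comb.
Variable n : nat.
Implicit Types (S T : {set 'I_n}).

Definition cge T (k : nat) : nat := #|[set x in T | (k <= x)%N]|.
Definition gle T S : Prop := cge T 0 = cge S 0 /\ forall k, (cge T k <= cge S k)%N.
Definition sw (i j : 'I_n) T : {set 'I_n} := [set x | tperm i j x \in T].

Lemma cge0 T : cge T 0 = #|T|.
Proof. by apply: eq_card => x; rewrite !inE andbT. Qed.



Lemma cgeS T (x : 'I_n) : cge T x = (x \in T) + cge T x.+1.
Proof.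
rewrite /cge (cardsD1 x) !inE leqnn andbT; congr (_ + _).
apply: eq_card => y; rewrite !inE ltn_neqAle; case: (y =P x) => [->|/eqP ne] /=.
  by rewrite !eqxx /= ?andbF.
by rewrite eq_sym ne.
Qed.

Variables (i j : 'I_n).
Hypothesis hij : (j : nat) = (i : nat).+1.

Lemma cge_sw_ne T k : k <> (j:nat) -> cge (sw i j T) k = cge T k.
Proof.
move=> kj; rewrite /cge -(card_preimset _ (@perm_inj _ (tperm i j))).
apply: eq_card => x; rewrite !inE tpermK; congr (_ && _).
case: tpermP => [->|->|//]; apply/idP/idP.
all: lia.
Show.
Qed.

Lemma cge_sw_j T : cge (sw i j T) j + (j \in T) = cge T j + (i \in T).
Proof.
rewrite !cgeS cge_sw_ne; last by lia.
rewrite /sw inE tpermR.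
by move: (i \in T) (j \in T) (cge T j.+1) => a b c; lia.
Qed.

Lemma card_sw T : #|sw i j T| = #|T|.
Proof. by rewrite -cge0 cge_sw_ne ?cge0 //; lia. Qed.

Lemma cge_i T : cge T i = (i \in T) + cge T j.
Proof. by rewrite cgeS hij. Qed.

Lemma sw_in T (x : 'I_n) : (x \in sw i j T) = (tperm i j x \in T).
Proof. by rewrite inE. Qed.

Variable S : {set 'I_n}.
Hypotheses (hiS : i \notin S) (hjS : j \in S).

Lemma G1 T : gle T (sw i j S) -> gle T S.
Proof.
have jne0 : 0 <> (j:nat) by lia.
move=> [h0 hk]; split; first by rewrite h0 cge_sw_ne.
move=> k; case: (k =P (j:nat)) => [->|kj]; last by rewrite -(cge_sw_ne S kj).
have := cge_sw_j S; rewrite hjS (negbTE hiS) => e.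
by apply: leq_trans (hk _) _; lia.
Qed.

Lemma G2 T : gle T (sw i j S) -> (i \in T) != (j \in T) -> gle (sw i j T) S.
Proof.
have jne0 : 0 <> (j:nat) by lia.
move=> [h0 hk] hne; split; first by rewrite cge_sw_ne // h0 cge_sw_ne.
move=> k; case: (k =P (j:nat)) => [->|kj].
  have := cge_sw_j S; rewrite hjS (negbTE hiS) => e.
  have := cge_sw_j T => e2; have := hk j.
  by move: hne e2; case: (i \in T); case: (j \in T) => //=; lia.
by rewrite !cge_sw_ne // -(cge_sw_ne S kj).
Qed.

Lemma G3 T : gle T S -> ~~ ((i \notin T) && (j \in T)) -> gle T (sw i j S).
Proof.
have jne0 : 0 <> (j:nat) by lia.
move=> [h0 hk] hne; split; first by rewrite cge_sw_ne.
move=> k; case: (k =P (j:nat)) => [->|kj]; last by rewrite cge_sw_ne.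
have := cge_sw_j S; rewrite hjS (negbTE hiS) => e.
have := cge_i T; have := cge_i S; rewrite (negbTE hiS) => eS eT.
have := hk i; have := hk (j:nat).+1.
have := cgeS T j; have := cgeS S j; rewrite hjS => e1 e2.
by move: hne eT e2; case: (i \in T); case: (j \in T) => //=; lia.
Qed.

Lemma G4 T : gle T S -> (i \notin T) -> (j \in T) -> gle (sw i j T) (sw i j S).
Proof.
have jne0 : 0 <> (j:nat) by lia.
move=> [h0 hk] hiT hjT; split; first by rewrite !cge_sw_ne.
move=> k; case: (k =P (j:nat)) => [->|kj]; last by rewrite !cge_sw_ne.
have := cge_sw_j S; rewrite hjS (negbTE hiS) => e.
have := cge_sw_j T; rewrite hjT (negbTE hiT) => e2.
have := hk j; lia.
Qed.

End Comb.

End M1.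
Import M1.

Module M2.

Set Implicit Arguments.
Unset Strict Implicit.
Unset Printing Implicit Defensive.

Lemma count_sorted n (T : {set 'I_n}) k : count (leq k) (sorted_elems T) = cge T k.
Proof.
have hp : perm_eq (sorted_elems T) [seq val i | i <- enum T] by rewrite /sorted_elems perm_sort.
rewrite (seq.permP hp) count_map /cge cardE.
rewrite /enum_mem size_filter -enumT /= count_filter.
by apply: eq_count => x; rewrite !inE andbC.
Qed.

Lemma size_sorted_elems n (T : {set 'I_n}) : size (sorted_elems T) = #|T|.
Proof. by rewrite /sorted_elems size_sort size_map cardE. Qed.

Lemma sorted_sorted_elems n (T : {set 'I_n}) : sorted leq (sorted_elems T).
Proof. exact: (sort_sorted leq_total). Qed.

Lemma E1 k (s1 s2 : seq nat) : size s1 = size s2 ->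
  (forall i, i < size s1 -> nth 0 s1 i <= nth 0 s2 i) ->
  count (leq k) s1 <= count (leq k) s2.
Proof.
elim: s1 s2 => [|a s1 IH] [|b s2] //= [hs] h.
have := h 0 erefl => /= hab.
have := IH s2 hs (fun i hi => h i.+1 hi) => hc.
apply: leq_add => //; case: (leqP k a) => ka /=; last by [].
by rewrite (leq_trans ka hab).
Qed.

Lemma E2 k (s : seq nat) idx : sorted leq s -> idx < size s -> k <= nth 0 s idx ->
  size s - idx <= count (leq k) s.
Proof.
move=> hs hi hk.
rewrite -(cat_take_drop idx s) count_cat -size_drop.
have -> : count (leq k) (drop idx s) = size (drop idx s).
  apply/eqP; rewrite -all_count; apply/(all_nthP 0) => p hp.
  rewrite nth_drop; apply: leq_trans hk _.
  rewrite size_drop in hp.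
  apply: (sorted_leq_nth leq_trans leqnn 0 hs); rewrite ?inE; lia.
by rewrite cat_take_drop; lia.
Qed.

Lemma E3 k (s : seq nat) idx : sorted leq s -> idx < size s -> nth 0 s idx < k ->
  count (leq k) s <= size s - idx.+1.
Proof.
move=> hs hi hk.
rewrite -(cat_take_drop idx.+1 s) count_cat.
have -> : count (leq k) (take idx.+1 s) = 0.
  apply/eqP; rewrite -leqn0 leqNgt -has_count; apply/hasPn => x /(nthP 0) [p hp <-].
  rewrite size_take in hp.
  rewrite nth_take; last by move: hp; case: ifP; lia.
  rewrite -ltnNge; apply: leq_ltn_trans hk.
  apply: (sorted_leq_nth leq_trans leqnn 0 hs); rewrite ?inE; move: hp; case: ifP; lia.
have := count_size (leq k) (drop idx.+1 s); rewrite size_drop cat_take_drop; lia.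
Qed.

Lemma gale_gle n (T S : {set 'I_n}) : gale_le T S <-> gle T S.
Proof.
rewrite /gale_le /gle !cge0.
split.
  case/andP => /eqP hc /allP ha; split; first by [].
  move=> k; rewrite -!count_sorted; apply: E1; first by rewrite !size_sorted_elems.
  by move=> i; rewrite size_sorted_elems => hi; apply: ha; rewrite mem_iota.
move=> [h0 hk]; rewrite h0 eqxx /=.
apply/allP => idx; rewrite mem_iota add0n => /andP [_ hi].
rewrite leqNgt; apply/negP => hlt.
have := E2 (sorted_sorted_elems T) (k := nth 0 (sorted_elems T) idx) (idx := idx).
rewrite size_sorted_elems h0 => /(_ hi (leqnn _)) h2.
have := E3 (sorted_sorted_elems S) (k := nth 0 (sorted_elems T) idx) (idx := idx).
rewrite size_sorted_elems => /(_ hi hlt) h3.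
have := hk (nth 0 (sorted_elems T) idx); rewrite -!count_sorted.
move: h2 h3; rewrite -[in X in X -> _ -> _ -> _](subnSK hi) => h2 h3 h4.
by have := leq_ltn_trans h3 (leq_trans h2 h4); rewrite ltnn.
Qed.

Section Base.
Variable n : nat.
Definition DC (S : {set 'I_n}) := forall x y : 'I_n, x \in S -> (y <= x)%N -> y \in S.

Lemma gle_DC S T : DC S -> gle T S -> T = S.
Proof.
move=> hS [h0 hk].
have sub : T \subset S.
  apply/subsetP => x xT; apply/negPn/negP => xS.
  have : cge S x = 0.
    apply/eqP; rewrite cards_eq0; apply/eqP/setP => y; rewrite !inE.
    apply/negP => /andP [yS xy]; by rewrite (hS _ _ yS xy) in xS.
  have := hk x; rewrite cgeS xT; lia.
apply/eqP; rewrite eqEcard sub /=; rewrite !cge0 in h0; by rewrite h0.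
Qed.
End Base.

End M2.
Import M2.

Module M3.

Set Implicit Arguments.
Unset Strict Implicit.
Unset Printing Implicit Defensive.

Import GRing.Theory.
Local Open Scope ring_scope.

Section Poly.
Variable n : nat.
Variables i j : 'I_n.
Hypothesis ij : i != j.
Let ji : j != i. Proof. by rewrite eq_sym. Qed.

Definition upd (m : 'X_{1..n}) (a b : nat) : 'X_{1..n} :=
  [multinom (if k == i then a else if k == j then b else m k) | k < n].

Lemma updE m a b k : upd m a b k = if k == i then a else if k == j then b else m k.
Proof. by rewrite mnmE. Qed.

Lemma upd_i m a b : upd m a b i = a.
Proof. by rewrite updE eqxx. Qed.
Lemma upd_j m a b : upd m a b j = b.
Proof. by rewrite updE eq_sym (negbTE ij) eqxx. Qed.

Lemma upd_id m : upd m (m i) (m j) = m.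
Proof.
apply/mnmP => k; rewrite updE; case: (k =P i) => [->//|_].
by case: (k =P j) => [->|].
Qed.

Lemma upd_Ui m c d : (U_(i) + upd m c d)%MM = upd m c.+1 d.
Proof.
apply/mnmP => k; rewrite mnmDE mnm1E !updE.
case: (k =P i) => [->|/eqP ki]; first by rewrite eqxx.
by rewrite eq_sym (negbTE ki).
Qed.

Lemma upd_Uj m c d : (U_(j) + upd m c d)%MM = upd m c d.+1.
Proof.
apply/mnmP => k; rewrite mnmDE mnm1E !updE.
case: (k =P i) => [->|/eqP ki]; first by rewrite ?eqxx ?(negbTE ij) ?(negbTE ji).
case: (k =P j) => [->|/eqP kj]; first by rewrite ?eqxx ?(negbTE ij) ?(negbTE ji).
by rewrite eq_sym (negbTE kj).
Qed.

Lemma upd_perm m a b : [multinom (upd m a b) (tperm i j k) | k < n] = upd m b a.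
Proof.
apply/mnmP => k; rewrite mnmE !updE.
case: tpermP => [->|->|/eqP ki /eqP kj].
- by rewrite ?eqxx ?(negbTE ij) ?(negbTE ji).
- by rewrite ?eqxx ?(negbTE ij) ?(negbTE ji).
- by rewrite (negbTE ki) (negbTE kj).
Qed.

Lemma coefMX0 (p : {mpoly int[n]}) (l : 'I_n) (m : 'X_{1..n}) :
  m l = 0%N -> (p * 'X_l)@_m = 0.
Proof.
move=> h; apply: memN_msupp_eq0.
rewrite (perm_mem (msuppMX p U_(l))); apply/mapP => -[m' _ e].
by move: h; rewrite e mnmDE mnm1E eqxx.
Qed.

Variables f g : {mpoly int[n]}.
Hypothesis hg : g * ('X_i - 'X_j) = 'X_i * f - msym (tperm i j) ('X_i * f).

Lemma rec_gen m s c : (c <= s)%N ->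
  g@_(upd m c (s-c)) - (g * 'X_j)@_(upd m c.+1 (s-c)) =
  f@_(upd m c (s-c)) - (f * 'X_i)@_(upd m (s-c) c.+1).
Proof.
move=> cs; have := congr1 (mcoeff (upd m c.+1 (s-c))) hg.
rewrite mulrBr !mcoeffB mcoeff_sym upd_perm -upd_Ui mcoeffMX.
by rewrite [_ * f]mulrC mcoeffMX.
Qed.

Lemma rec_top m s : g@_(upd m s 0) = f@_(upd m s 0).
Proof.
have := rec_gen m (leqnn s); rewrite subnn !coefMX0 ?upd_j ?upd_i //.
by rewrite !subr0.
Qed.

Definition FF (h : {mpoly int[n]}) m s p := h@_(upd m p (s - p)).

Lemma rec_step m s c : (c < s)%N ->
  FF g m s c - FF g m s c.+1 = FF f m s c - FF f m s (s - c.+1).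
Proof.
move=> cs; have := rec_gen m (ltnW cs); rewrite /FF.
have e : (s - c = (s - c.+1).+1)%N by lia.
rewrite (_ : upd m c.+1 (s - c) = (U_(j) + upd m c.+1 (s - c.+1))%MM); last by rewrite upd_Uj e.
rewrite (_ : upd m (s - c) c.+1 = (U_(i) + upd m (s - c.+1) c.+1)%MM); last by rewrite upd_Ui e.
rewrite !mcoeffMX.
by have -> : (s - (s - c.+1) = c.+1)%N by lia.
Qed.

Lemma rec_top' m s : FF g m s s = FF f m s s.
Proof. by rewrite /FF subnn rec_top. Qed.

End Poly.

Definition w (s c p : nat) : int := (c <= p)%N%:Z - (p + c < s)%N%:Z.

Lemma sum_pick (N k : nat) (F : nat -> int) : (k < N)%N ->
  \sum_(p < N) (val p == k)%:Z * F p = F k.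
Proof.
move=> hk; rewrite (bigD1 (Ordinal hk)) //= eqxx mul1r big1 ?addr0 //.
move=> p hp; case: eqP => [e|_]; last by rewrite mul0r.
have hp2 : p == Ordinal hk by apply/eqP/val_inj.
by rewrite hp2 in hp.
Qed.

Lemma closed_form (G F : nat -> int) s :
  G s = F s -> (forall c, (c < s)%N -> G c - G c.+1 = F c - F (s - c.+1)%N) ->
  forall c, (c <= s)%N -> G c = \sum_(p < s.+1) w s c p * F p.
Proof.
move=> htop hstep.
suff H : forall d, (d <= s)%N -> G (s - d)%N = \sum_(p < s.+1) w s (s - d) p * F p.
  by move=> c cs; have := H (s - c)%N (leq_subr _ _); rewrite subKn.
elim=> [|d IH] hd.
  rewrite subn0 big_ord_recr /= big1 ?add0r.
    by rewrite /w leqnn /= ltnNge leq_addl /= mul1r htop.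
  by move=> p _; rewrite /w leqNgt ltn_ord /= ltnNge leq_addl /= mul0r.
have hc : (s - d.+1 < s)%N by lia.
have e : G (s - d.+1)%N = G (s - d.+1).+1 + (F (s - d.+1)%N - F (s - (s - d.+1).+1)%N).
  by rewrite -(hstep _ hc) addrC subrK.
have e2 : ((s - d.+1).+1 = s - d)%N by lia.
rewrite e e2 IH ?(ltnW hd) //.
have -> : F (s - d.+1)%N - F (s - (s - d))%N =
   \sum_(p < s.+1) ((val p == (s - d.+1)%N)%:Z - (val p == (s - (s - d))%N)%:Z) * F p.
  rewrite -[F (s - d.+1)%N](@sum_pick s.+1); last by lia.
  rewrite -[F (s - (s - d))%N](@sum_pick s.+1); last by lia.
  by rewrite -sumrB; apply: eq_bigr => p _; rewrite mulrBl.
rewrite -big_split /=; apply: eq_bigr => p _.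
rewrite -mulrDl; congr (_ * _); rewrite /w.
have -> : (s - (s - d) = d)%N by lia.
move: (val p) (ltn_ord p) => q hq.
case: (leqP (s - d.+1) q) => h1; case: (leqP (s - d) q) => h2;
case: (ltnP (q + (s - d.+1)) s) => h3; case: (ltnP (q + (s - d)) s) => h4;
case: (q =P (s - d.+1)%N) => h5; case: (q =P d) => h6 //=; try lia.
Qed.


Lemma w_nz s c p : w s c p != 0 ->
  ((c <= p) && (s <= p + c) || (p < c) && (p + c < s))%N.
Proof.
rewrite /w; case: (leqP c p) => h1; case: (ltnP (p + c) s) => h2 //=;
by rewrite ?subrr ?eqxx.
Qed.

Lemma closed_nz (G F : nat -> int) s c :
  (c <= s)%N -> G c = \sum_(p < s.+1) w s c p * F p -> G c != 0 ->
  exists p, [/\ (p <= s)%N, F p != 0 & w s c p != 0].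
Proof.
move=> cs -> nz.
case: (pickP (fun p : 'I_s.+1 => w s c p * F p != 0)) => [p hp | h]; last first.
  by move: nz; rewrite big1 ?eqxx // => p _; have := h p; move/negbFE/eqP.
exists p; move: hp; rewrite mulf_eq0 negb_or => /andP [h1 h2].
by split => //; rewrite -ltnS.
Qed.

Lemma closed_single (G F : nat -> int) s c p0 :
  (p0 <= s)%N -> G c = \sum_(p < s.+1) w s c p * F p ->
  (forall p, (p <= s)%N -> p <> p0 -> w s c p * F p = 0) ->
  G c = w s c p0 * F p0.
Proof.
move=> hp0 -> h; rewrite (bigD1 (Ordinal (hp0 : p0 < s.+1)%N)) //= big1 ?addr0 //.
move=> p hp; apply: h; first by rewrite -ltnS.
move=> e; have hp2 : p == Ordinal (hp0 : (p0 < s.+1)%N) by apply/eqP/val_inj.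
by rewrite hp2 in hp.
Qed.

End M3.
Import M3.

Module M4.

Set Implicit Arguments.
Unset Strict Implicit.
Unset Printing Implicit Defensive.

Import GRing.Theory.
Local Open Scope ring_scope.

Section Ex.
Variable n : nat.
Variables i j : 'I_n.
Hypothesis ij : i != j.

Definition DV (p : {mpoly int[n]}) := exists q, q * ('X_i - 'X_j) = p.

Lemma DV0 : DV 0. Proof. by exists 0; rewrite mul0r. Qed.
Lemma DVD p q : DV p -> DV q -> DV (p + q).
Proof. by move=> [a <-] [b <-]; exists (a + b); rewrite mulrDl. Qed.
Lemma DVM r p : DV p -> DV (r * p).
Proof. by move=> [a <-]; exists (r * a); rewrite mulrA. Qed.
Lemma DVN p : DV p -> DV (- p).
Proof. by move=> [a <-]; exists (- a); rewrite mulNr. Qed.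
Lemma DVZ c p : DV p -> DV (c *: p).
Proof. by move=> [a <-]; exists (c *: a); rewrite scalerAl. Qed.

Lemma DVxy a b : DV ('X_i ^+ a * 'X_j ^+ b - 'X_i ^+ b * 'X_j ^+ a).
Proof.
wlog ab : a b / (b <= a)%N.
  move=> H; case: (leqP b a) => h; first exact: H.
  have := DVN (H b a (ltnW h)); by rewrite opprB.
have -> : a = (b + (a - b))%N by lia.
move: (a - b)%N => d.
have -> : 'X_i ^+ (b + d) * 'X_j ^+ b - 'X_i ^+ b * 'X_j ^+ (b + d) =
   ('X_i ^+ b * 'X_j ^+ b : {mpoly int[n]}) * ('X_i ^+ d - 'X_j ^+ d).
  by rewrite !exprD; ring.
apply: DVM; rewrite subrXX; exists (\sum_(k < d) 'X_i ^+ (d.-1 - k) * 'X_j ^+ k).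
by rewrite mulrC.
Qed.

Lemma X_upd m a b : 'X_[upd i j m a b] =
  'X_[upd i j m 0 0] * 'X_i ^+ a * 'X_j ^+ b :> {mpoly int[n]}.
Proof.
elim: b => [|b IHb].
  elim: a => [|a IHa]; first by rewrite !expr0 !mulr1.
  by rewrite -upd_Ui mpolyXD IHa !expr0 !mulr1 exprS; ring.
by rewrite -upd_Uj // mpolyXD IHb exprS; ring.
Qed.

Lemma DVmon m : DV ('X_[m] - msym (tperm i j) 'X_[m]).
Proof.
rewrite msymX tpermV.
have := upd_perm ij m (m i) (m j); rewrite upd_id => e.
rewrite e -{1}(upd_id i j m) (X_upd m (m i)) (X_upd m (m j)) -!mulrA -mulrBr.
apply: DVM; exact: DVxy.
Qed.

Lemma ddiff_spec (h : {mpoly int[n]}) :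
  ddiff i j h * ('X_i - 'X_j) = h - msym (tperm i j) h.
Proof.
apply: (epsilon_spec (inhabits 0) (fun g : {mpoly int[n]} => g * ('X_i - 'X_j) = h - msym (tperm i j) h)).
have -> : h - msym (tperm i j) h =
   \sum_(m <- msupp h) h@_m *: ('X_[m] - msym (tperm i j) 'X_[m]).
  rewrite [in LHS](mpolyE h).
  rewrite [msym _ _]raddf_sum -sumrB; apply: eq_bigr => m _.
  by rewrite scalerBr; congr (_ - _); exact: msymZ.
apply: (big_ind DV); [exact: DV0 | exact: DVD | move=> m _; apply: DVZ; exact: DVmon].
Qed.
End Ex.

End M4.
Import M4.

Module M5.

Set Implicit Arguments.
Unset Strict Implicit.
Unset Printing Implicit Defensive.

Section Lists.
Variable n : nat.
Variable t : nat.

Definition cnt (Ts : seq {set 'I_n}) (k : 'I_n) : nat :=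
  count (fun T : {set 'I_n} => k \in T) Ts.

Definition cntAB (Ts : seq {set 'I_n}) (a b : 'I_n) : nat :=
  count (fun T : {set 'I_n} => (a \in T) && (b \in T)) Ts.
Definition cntAnB (Ts : seq {set 'I_n}) (a b : 'I_n) : nat :=
  count (fun T : {set 'I_n} => (a \in T) && (b \notin T)) Ts.
Arguments cnt : simpl never.
Arguments cntAB : simpl never.
Arguments cntAnB : simpl never.
Lemma cnt_cons T Ts k : cnt (T :: Ts) k = ((k \in T) + cnt Ts k)%N.
Proof. by rewrite /cnt. Qed.

Definition inM (S : {set 'I_n}) (m : 'X_{1..n}) := exists Ts : seq {set 'I_n},
  [/\ size Ts = t, (forall T, T \in Ts -> gle T S) &
      forall k, m k = cnt Ts k].

Variables i j : 'I_n.
Hypothesis hij : (j : nat) = (i : nat).+1.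
Variable S : {set 'I_n}.
Hypotheses (hiS : i \notin S) (hjS : j \in S).

Lemma ij_neq : i != j.
Proof. apply/eqP => e; move: hij; rewrite e; lia. Qed.

Lemma swcount (a b : 'I_n) (T : {set 'I_n}) : (a == i) && (b == j) || (a == j) && (b == i) ->
  a \in T -> b \notin T -> forall k : 'I_n, (k \in sw i j T) + (k == a) = (k \in T) + (k == b).
Proof.
have ne := ij_neq.
move=> hab aT bT k; rewrite sw_in.
case/orP: hab => /andP [/eqP ea /eqP eb]; subst a b.
- case: tpermP => [->|->|/eqP ki /eqP kj].
  + by rewrite eqxx (negbTE ne) (negbTE bT) aT.
  + by rewrite eqxx eq_sym (negbTE ne) (negbTE bT) aT.
  + by rewrite (negbTE ki) (negbTE kj).
- case: tpermP => [->|->|/eqP ki /eqP kj].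
  + by rewrite eqxx (negbTE ne) (negbTE bT) aT.
  + by rewrite eqxx eq_sym (negbTE ne) (negbTE bT) aT.
  + by rewrite (negbTE ki) (negbTE kj).
Qed.

Lemma shift (a b : 'I_n) : (a == i) && (b == j) || (a == j) && (b == i) ->
  forall Ts d, (forall T, T \in Ts -> gle T (sw i j S)) ->
  (d <= cntAnB Ts a b)%N ->
  exists Ts', [/\ size Ts' = size Ts, (forall T, T \in Ts' -> gle T S) &
     forall k, (cnt Ts' k + d * (k == a) = cnt Ts k + d * (k == b))%N].
Proof.
move=> hab; elim=> [|T Ts IH] d hT hd.
  by exists [::]; split => // k; move: hd; rewrite leqn0 => /eqP ->.
have hT' : forall T', T' \in Ts -> gle T' (sw i j S) by move=> T' h; apply: hT; rewrite inE h orbT.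
have gT : gle T (sw i j S) by apply: hT; rewrite inE eqxx.
case hP : ((a \in T) && (b \notin T)); move: hd; rewrite /cntAnB /= hP -/(cntAnB Ts a b) => hd.
  case: d hd => [|d] hd.
    have [Ts' [h1 h2 h3]] := IH 0%N hT' (leq0n _).
    exists (T :: Ts'); split => /=; first by rewrite h1.
      move=> T'; rewrite inE => /orP [/eqP ->|h]; last exact: h2.
      exact: G1 gT.
    by move=> k; have := h3 k; rewrite !cnt_cons !mul0n; lia.
  have [Ts' [h1 h2 h3]] := IH d hT' hd.
  exists (sw i j T :: Ts'); split => /=; first by rewrite h1.
    move=> T'; rewrite inE => /orP [/eqP ->|h]; last exact: h2.
    apply: G2 => //; move/andP: hP => [aT bT].
    by case/orP: hab => /andP [/eqP ea /eqP eb]; subst a b; rewrite aT (negbTE bT).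
  move=> k; have := h3 k; move/andP: hP => [aT bT].
  have := swcount hab aT bT k.
  rewrite !cnt_cons; move: (cnt Ts' k) (cnt Ts k) => c1 c2.
  case: (k \in sw i j T); case: (k \in T); case: (k == a); case: (k == b); rewrite /= ?muln0 ?muln1; lia.
have [Ts' [h1 h2 h3]] := IH d hT' hd.
exists (T :: Ts'); split => /=; first by rewrite h1.
  move=> T'; rewrite inE => /orP [/eqP ->|h]; last exact: h2.
  exact: G1 gT.
by move=> k; have := h3 k; rewrite !cnt_cons; move: (cnt Ts' k) (cnt Ts k) => c1 c2; case: (k == a); case: (k == b); rewrite /= ?muln0 ?muln1; lia.
Qed.

Lemma count_split (Ts : seq {set 'I_n}) (a b : 'I_n) :
  cnt Ts a =
  (cntAnB Ts a b + cntAB Ts a b)%N.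
Proof.
rewrite /cnt /cntAnB /cntAB; elim: Ts => //= T Ts ->; move: (a \in T) (b \in T) => [] [] /=; lia.
Qed.

Lemma Aprop (m m' : 'X_{1..n}) : inM (sw i j S) m ->
  (forall k, k != i -> k != j -> m' k = m k) ->
  (m' i + m' j = m i + m j)%N ->
  ((m i <= m' i <= m j) || (m j <= m' i <= m i))%N -> inM S m'.
Proof.
move=> [Ts [hs hT hc]] hoff hsum hbet.
have ne := ij_neq.
have ci := count_split Ts i j; have cj := count_split Ts j i.
have e1 : cntAB Ts i j = cntAB Ts j i.
  by apply: eq_count => T; rewrite andbC.
have hi := hc i; have hj := hc j.
have ji : j != i by rewrite eq_sym.
case: (leqP (m' i) (m i)) => hle.
  have [Ts' [h1 h2 h3]] := @shift i j (ltac:(by rewrite !eqxx)) Ts (m i - m' i)%N hT (ltac:(lia)).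
  exists Ts'; split => //; first by rewrite h1.
  move=> k; have := h3 k; case: (k =P i) => [->|/eqP ki].
    rewrite ?eqxx ?(negbTE ne) ?muln1 ?muln0; lia.
  case: (k =P j) => [->|/eqP kj].
    rewrite ?eqxx ?(negbTE ji) ?muln1 ?muln0; lia.
  rewrite ?muln0 (hoff k ki kj) hc; lia.
have [Ts' [h1 h2 h3]] := @shift j i (ltac:(by rewrite !eqxx orbT)) Ts (m' i - m i)%N hT (ltac:(lia)).
exists Ts'; split => //; first by rewrite h1.
move=> k; have := h3 k; case: (k =P i) => [->|/eqP ki].
  rewrite ?eqxx ?(negbTE ne) ?muln1 ?muln0; lia.
case: (k =P j) => [->|/eqP kj].
  rewrite ?eqxx ?(negbTE ji) ?muln1 ?muln0; lia.
rewrite ?muln0 (hoff k ki kj) hc; lia.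
Qed.

End Lists.

End M5.
Import M5.

Module M6.

Set Implicit Arguments.
Unset Strict Implicit.
Unset Printing Implicit Defensive.

Import GRing.Theory.
Local Open Scope ring_scope.

Section Main.
Variable n t : nat.
Hypothesis ht : (0 < t)%N.

Lemma sindE (T : {set 'I_n}) k : scaled_indicator t T k = (t * (k \in T))%N.
Proof. by rewrite mnmE. Qed.

Definition Inv (S : {set 'I_n}) (f : {mpoly int[n]}) :=
  (forall m, f@_m != 0 -> inM t S m) /\
  (forall T, gle T S -> f@_(scaled_indicator t T) != 0).

Lemma inM_le (S : {set 'I_n}) (m : 'X_{1..n}) (k : 'I_n) : inM t S m -> (m k <= t)%N.
Proof. by move=> [Ts [hs _ hc]]; rewrite hc -hs /cnt count_size. Qed.

Variables i j : 'I_n.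
Hypothesis hij : (j : nat) = (i : nat).+1.
Variable S : {set 'I_n}.
Hypotheses (hiS : i \notin S) (hjS : j \in S).
Variables f g : {mpoly int[n]}.
Hypothesis hg : g * ('X_i - 'X_j) = 'X_i * f - msym (tperm i j) ('X_i * f).
Hypothesis hf : Inv (sw i j S) f.

Let ne : i != j := ij_neq hij hiS hjS.

Lemma closedG (m : 'X_{1..n}) : g@_m =
  \sum_(p < (m i + m j).+1) w (m i + m j) (m i) p * FF i j f m (m i + m j) p.
Proof.
have := @closed_form (FF i j g m (m i + m j)) (FF i j f m (m i + m j)) (m i + m j)
  (rec_top' ne hg m _) (fun c hc => rec_step ne hg m hc) (m i) (leq_addr _ _).
by rewrite /FF addKn upd_id.
Qed.

Lemma propA m' : g@_m' != 0 -> inM t S m'.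
Proof.
move=> nz; have := @closed_nz (fun _ => g@_m') _ _ _ (leq_addr (m' j) (m' i)) (closedG m').
move=> /(_ nz) [p [hp hF hw]].
have hin := (hf.1 _ hF).
apply: (Aprop hij hiS hjS hin).
- by move=> k ki kj; rewrite updE (negbTE ki) (negbTE kj).
- by rewrite upd_i upd_j; lia.
- rewrite upd_i upd_j; move/w_nz: hw; lia.
Qed.

Lemma propB_help (m' : 'X_{1..n}) p0 T0 :
  (p0 <= m' i + m' j)%N ->
  upd i j m' p0 (m' i + m' j - p0) = scaled_indicator t T0 ->
  gle T0 (sw i j S) ->
  w (m' i + m' j) (m' i) p0 = 1 ->
  (forall p, (p <= m' i + m' j)%N -> p <> p0 ->
     w (m' i + m' j) (m' i) p = 0 \/ FF i j f m' (m' i + m' j) p = 0) ->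
  g@_m' != 0.
Proof.
move=> hp0 hu hT hw1 h.
rewrite (@closed_single (fun _ => g@_m') _ _ _ _ hp0 (closedG m')); last first.
  by move=> p hp hne; case: (h p hp hne) => ->; rewrite ?mulr0 ?mul0r.
by rewrite hw1 mul1r /FF hu; apply: hf.2.
Qed.

Lemma propB T : gle T S -> g@_(scaled_indicator t T) != 0.
Proof.
move=> hT; set m' := scaled_indicator t T.
have mi : m' i = (t * (i \in T))%N by rewrite sindE.
have mj : m' j = (t * (j \in T))%N by rewrite sindE.
have ji : j != i by rewrite eq_sym.
case hiT : (i \in T); case hjT : (j \in T); rewrite hiT in mi; rewrite hjT in mj.
-
  apply: (@propB_help m' t T); rewrite ?mi ?mj ?muln1 //.
  + lia.
  + apply/mnmP => k; rewrite updE; case: (k =P i) => [->|/eqP ki]; first by rewrite sindE hiT muln1.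
    case: (k =P j) => [->|//]; by rewrite sindE hjT; lia.
  + by apply: G3 => //; rewrite hiT.
  + by rewrite /w leqnn /=; have -> : (t + t < t + t)%N = false by rewrite ltnn.
  + move=> p hp hne; right; case: (eqVneq (FF i j f m' (t + t) p) 0) => // nz; exfalso.
    have := inM_le i (hf.1 _ nz); have := inM_le j (hf.1 _ nz).
    rewrite upd_i upd_j; lia.
-
  apply: (@propB_help m' t T); rewrite ?mi ?mj ?muln1 ?muln0 ?addn0 //.
  + apply/mnmP => k; rewrite updE; case: (k =P i) => [->|/eqP ki]; first by rewrite sindE hiT muln1.
    case: (k =P j) => [->|//]; by rewrite sindE hjT subnn muln0.
  + by apply: G3 => //; rewrite hiT.
  + by rewrite /w leqnn /= ltnNge leq_addl.
  + move=> p hp hne; left; rewrite /w; have -> : (t <= p)%N = false by apply/negbTE; rewrite -ltnNge; lia.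
    by rewrite ltnNge leq_addl.
-
  apply: (@propB_help m' t (sw i j T)); rewrite ?mi ?mj ?muln1 ?muln0 ?add0n //.
  + apply/mnmP => k; rewrite updE sindE sw_in.
    case: (k =P i) => [->|/eqP ki]; first by rewrite tpermL hjT muln1.
    case: (k =P j) => [->|/eqP kj]; first by rewrite tpermR hiT subnn muln0.
    by rewrite tpermD // 1?eq_sym // sindE.
  + by apply: G4 => //; rewrite hiT.
  + by rewrite /w leq0n addn0 ltnn subr0.
  + by move=> p hp hne; left; rewrite /w leq0n /=; have -> : (p + 0 < t)%N by lia.
-
  apply: (@propB_help m' 0 T); rewrite ?mi ?mj ?muln0 ?add0n //.
  + apply/mnmP => k; rewrite updE; case: (k =P i) => [->|/eqP ki]; first by rewrite sindE hiT muln0.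
    case: (k =P j) => [->|//]; by rewrite sindE hjT muln0.
  + by apply: G3 => //; rewrite hiT hjT.
  + by move=> p hp hne; lia.
Qed.

Lemma prop : Inv S g.
Proof. split; [exact: propA | exact: propB]. Qed.

End Main.

End M6.
Import M6.

Module M7.

Set Implicit Arguments.
Unset Strict Implicit.
Unset Printing Implicit Defensive.

Import GRing.Theory.
Local Open Scope ring_scope.

Section Fuel.
Variable n t : nat.
Hypothesis ht : (0 < t)%N.

Definition pot (S : {set 'I_n}) : nat := (\sum_(x in S) (x : nat))%N.

Lemma mnm_swap_sind (i j : 'I_n) (S : {set 'I_n}) :
  mnm_swap i j (scaled_indicator t S) = scaled_indicator t (sw i j S).
Proof. by apply/mnmP => k; rewrite /mnm_swap !mnmE sw_in. Qed.

Lemma pot_sw (i j : 'I_n) (S : {set 'I_n}) : (j : nat) = (i : nat).+1 -> i \notin S -> j \in S ->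
  (pot (sw i j S)).+1 = pot S.
Proof.
move=> hij hiS hjS; have ne : i != j by apply/eqP => e; move: hij; rewrite e; lia.
rewrite /pot (bigD1 j hjS) [X in (X.+1 = _)](bigD1 i) /=; last by rewrite sw_in tpermL.
rewrite (eq_bigl (fun x : 'I_n => (x \in S) && (x != j))).
  rewrite hij addSn; congr (_ .+1); congr (_ + _); by apply: eq_bigl => x.
move=> x /=; rewrite sw_in; case: tpermP => [->|->|/eqP xi /eqP xj].
- by rewrite eqxx andbF (negbTE hiS).
- by rewrite eqxx andbF (negbTE hiS).
- by rewrite xi xj.
Qed.

Lemma le_pot (S : {set 'I_n}) (x : 'I_n) : x \in S -> (x <= pot S)%N.
Proof. by move=> xS; rewrite /pot (bigD1 x) //= leq_addr. Qed.

Lemma DC_of_noasc (S : {set 'I_n}) :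
  (forall a b : 'I_n, (b : nat) = (a : nat).+1 -> a \notin S -> b \in S -> False) -> DC S.
Proof.
move=> h.
suff H : forall d (x y : 'I_n), (x : nat) = (y + d)%N -> x \in S -> y \in S.
  by move=> x y xS yx; apply: (H (x - y)%N x y) => //; lia.
elim=> [|d IH] x y e xS.
  by have -> : y = x by apply: val_inj; rewrite /= e addn0.
have hz : (y.+1 < n)%N by have := ltn_ord x; lia.
have zS : Ordinal hz \in S by apply: (IH x) => //=; lia.
apply/negPn/negP => yS; exact: (h y (Ordinal hz) erefl yS zS).
Qed.

Lemma base (S : {set 'I_n}) : DC S -> Inv t S 'X_[scaled_indicator t S].
Proof.
move=> hS; split.
  move=> m; rewrite mcoeffX; have [<- _|hne] := eqVneq (scaled_indicator t S) m; last by rewrite eqxx.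
  exists (nseq t S); split; first by rewrite size_nseq.
    by move=> T; rewrite mem_nseq => /andP [_ /eqP ->]; split.
  by move=> k; rewrite sindE /cnt count_nseq mulnC.
move=> T hT; rewrite (gle_DC hS hT) mcoeffX eqxx; exact: oner_neq0.
Qed.

Lemma main_inv k (S : {set 'I_n}) : (pot S <= k)%N -> Inv t S (key_rec k (scaled_indicator t S)).
Proof.
elim: k S => [|k IH] S hk /=.
  apply: base => x y xS yx; have := le_pot xS.
  have -> : y = x by apply: val_inj => /=; have := le_pot xS; lia.
  by [].
case: pickP => [[a b] /= hab | hnone]; last first.
  apply: base; apply: DC_of_noasc => a b e aS bS.
  have := hnone (a, b); rewrite /ascent /= e eqxx /= !sindE (negbTE aS) bS; lia.
move: hab; rewrite /ascent /= !sindE => /andP [/eqP hba hlt].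
have aS : a \notin S by apply/negP => aS; move: hlt; rewrite aS; case: (b \in S); lia.
have bS : b \in S by apply/negPn/negP => /negbTE bS; move: hlt; rewrite bS; lia.
have ne : a != b by apply/eqP => e; move: hba; rewrite e; lia.
rewrite mnm_swap_sind.
have hf := IH (sw a b S) (ltac:(have := pot_sw hba aS bS; lia)).
exact: (prop ht hba aS bS (ddiff_spec ne _) hf).
Qed.

End Fuel.

End M7.
Import M7.


Set Implicit Arguments.
Unset Strict Implicit.
Unset Printing Implicit Defensive.

Import Order.TTheory GRing.Theory Num.Theory.
Local Open Scope ring_scope.

Section Conv.
Variable R : realFieldType.
Variable n : nat.

Lemma conv_pt (B : seq 'rV[R]_n) b : b \in B -> conv B b.
Proof.
move=> bB; have hi : (index b B < size B)%N by rewrite index_mem.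
exists (fun k => (k == Ordinal hi)%:R); split; [|split].
- by move=> k; rewrite ler0n.
- rewrite (bigD1 (Ordinal hi)) //= eqxx big1 ?addr0 // => k hk.
  by rewrite (negbTE hk).
- rewrite (bigD1 (Ordinal hi)) //= eqxx scale1r nth_index // big1 ?addr0 // => k hk.
  by rewrite (negbTE hk) scale0r.
Qed.

Lemma conv_comb (A B : seq 'rV[R]_n) (c : R) y :
  (forall k : 'I_(size A), conv B (c *: nth 0 A k)) -> conv A y -> conv B (c *: y).
Proof.
move=> hA [w [w0 [w1 ->]]].
have [v hv] := fin_all_exists hA.
exists (fun l => \sum_k w k * v k l); split; [|split].
- by move=> l; apply: sumr_ge0 => k _; apply: mulr_ge0 => //; case: (hv k) => h _; apply: h.
- rewrite exchange_big /= -w1; apply: eq_bigr => k _.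
  by rewrite -mulr_sumr; case: (hv k) => _ [-> _]; rewrite mulr1.
- rewrite scaler_sumr.
  transitivity (\sum_k w k *: (c *: nth 0 A k)).
    by apply: eq_bigr => k _; rewrite !scalerA mulrC.
  transitivity (\sum_k \sum_l (w k * v k l) *: nth 0 B l).
    apply: eq_bigr => k _; case: (hv k) => _ [_ ->].
    by rewrite scaler_sumr; apply: eq_bigr => l _; rewrite scalerA.
  by rewrite exchange_big /=; apply: eq_bigr => l _; rewrite scaler_suml.
Qed.
End Conv.

Lemma sum_indic (R : realFieldType) n (Ts : seq {set 'I_n}) :
  \sum_(T <- Ts) indic_vec R T = \row_j ((cnt Ts j)%:R : R).
Proof.
apply/matrixP => a b; rewrite summxE !mxE /cnt.
elim: Ts => [|T Ts IH]; first by rewrite big_nil.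
by rewrite big_cons /= IH !mxE natrD.
Qed.

Theorem lemma3p1 (R : realFieldType) (n : nat) (S : {set 'I_n}) (t : nat) :
  (0 < t)%N ->
  forall x : 'rV[R]_n,
    dilate t%:R (matroid_polytope (R := R) (schubert_bases S)) x <->
    newton (R := R) (key_poly (scaled_indicator t S)) x.
Proof.
move=> ht x.
have hpot : (pot S <= n * n)%N.
  have h1 : (pot S <= \sum_(x in S) n)%N by apply: leq_sum => y _; exact: ltnW (ltn_ord y).
  apply: leq_trans h1 _; rewrite sum_nat_const; apply: leq_mul => //.
  by rewrite -[X in (_ <= X)%N]card_ord; exact: max_card.
have [hA hB] := main_inv ht hpot.
have tnz : (t%:R : R) != 0 by rewrite pnatr_eq0 -lt0n.
rewrite /newton /matroid_polytope /dilate /key_poly.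
split.
  move=> [y hy ->]; apply: conv_comb hy => k.
  rewrite (nth_map set0); last by rewrite -(size_map (@indic_vec R n)).
  set T := nth set0 _ _.
  have hT : T \in schubert_bases S by rewrite -mem_enum mem_nth // -(size_map (@indic_vec R n)).
  apply: conv_pt.
  have -> : t%:R *: indic_vec R T = \row_j (((scaled_indicator t T) j)%:R : R).
    by apply/matrixP => a b; rewrite !mxE sindE natrM.
  apply: (map_f (fun m : 'X_{1..n} => \row_j ((m j)%:R : R))).
  rewrite mcoeff_msupp; apply: hB; apply/gale_gle.
  by move: hT; rewrite inE.
move=> hx; exists (t%:R^-1 *: x); last by rewrite scalerA mulfV // scale1r.
apply: conv_comb hx => k.
rewrite (nth_map 0%MM); last by rewrite -(size_map (fun m : 'X_{1..n} => \row_j ((m j)%:R : R))).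
set m := nth 0%MM _ _.
have hm : m \in msupp (key_rec (n * n) (scaled_indicator t S)).
  by rewrite mem_nth // -(size_map (fun m : 'X_{1..n} => \row_j ((m j)%:R : R))).
move: hm; rewrite mcoeff_msupp => /hA [Ts [hs hT hc]].
rewrite -[_ *: _]scale1r; apply: (@conv_comb R n [seq indic_vec R T | T <- Ts]).
  move=> k'; rewrite scale1r; apply: conv_pt.
  rewrite (nth_map set0); last by rewrite -(size_map (@indic_vec R n)).
  apply: map_f; rewrite mem_enum inE; apply/gale_gle; apply: hT.
  by rewrite mem_nth // -(size_map (@indic_vec R n)).
exists (fun _ => t%:R^-1); split; [|split].
- by move=> _; rewrite invr_ge0 ler0n.
- by rewrite sumr_const card_ord size_map hs -[_ *+ t]mulr_natr mulVf.
- rewrite -scaler_sumr; congr (_ *: _).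
  rewrite -(big_mkord xpredT (fun k => nth 0 [seq indic_vec R T | T <- Ts] k)).
  rewrite -(big_nth 0 xpredT (fun v => v)) big_map sum_indic.
  by apply/matrixP => a b; rewrite !mxE hc.
Qed.
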